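(* Let $\mathcal{I}\subseteq[K]$ be nonempty, let $\psi:\Omega\to\mathbb{R}$ ($\Omega\subseteq\mathbb{R}$) be strictly convex, and let positive learning rates $\gamma^t_i,\gamma^{t+1}_i$ be such that for every $i$ and $s\in\{t,t+1\}$ the function $\gamma^s_i\psi$ is twice differentiable with invertible derivative whose inverse is differentiable and convex. Let $\phi^s_{\mathcal{I}}(x)=\sum_{i\in\mathcal{I}}\gamma^s_i\psi(x_i)$, $\hat\ell^t\in\mathbb{R}^K$, $c\in\mathbb{R}$, and let $p,q$ with $p_i,q_i\in\Omega$ for $i\in\mathcal{I}$ and $\sum_{i\in\mathcal{I}}p_i=\sum_{i\in\mathcal{I}}q_i$. (a) If $\nabla\phi^{t+1}_{\mathcal{I}}(q)=\nabla\phi^t_{\mathcal{I}}(p)-\hat\ell^t_{\mathcal{I}}+c\cdot\mathbf{1}_{\mathcal{I}}$, then $$c\le\Big(\sum_{i\in\mathcal{I}}\frac{1}{\gamma^{t+1}_i\psi''(p_i)}\Big)^{-1}\sum_{i\in\mathcal{I}}\frac{(\gamma^{t+1}_i-\gamma^t_i)\psi'(p_i)+\hat\ell^t_i}{\gamma^{t+1}_i\psi''(p_i)},\qquad c\ge\Big(\sum_{i\in\mathcal{I}}\frac{1}{\gamma^{t}_i\psi''(q_i)}\Big)^{-1}\sum_{i\in\mathcal{I}}\frac{(\gamma^{t+1}_i-\gamma^t_i)\psi'(q_i)+\hat\ell^t_i}{\gamma^{t}_i\psi''(q_i)}.$$ (b) If $\nabla\phi^{t}_{\mathcal{I}}(q)=\nabla\phi^t_{\mathcal{I}}(p)-\hat\ell^t_{\mathcal{I}}+c\cdot\mathbf{1}_{\mathcal{I}}$,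 then $$\Big(\sum_{i\in\mathcal{I}}\frac{1}{\gamma^{t}_i\psi''(q_i)}\Big)^{-1}\sum_{i\in\mathcal{I}}\frac{\hat\ell^t_i}{\gamma^{t}_i\psi''(q_i)}\le c\le\Big(\sum_{i\in\mathcal{I}}\frac{1}{\gamma^{t}_i\psi''(p_i)}\Big)^{-1}\sum_{i\in\mathcal{I}}\frac{\hat\ell^t_i}{\gamma^{t}_i\psi''(p_i)}.$$
   Context: Gradients of $\phi^s_{\mathcal{I}}$ are taken coordinatewise on $\mathcal{I}$; $v_{\mathcal{I}}$ denotes the vector agreeing with $v$ on $\mathcal{I}$ and $0$ elsewhere, and $\mathbf{1}_{\mathcal{I}}$ is the indicator vector of $\mathcal{I}$. The equations are required coordinatewise for $i\in\mathcal{I}$. *)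

(* Defs.v *)
From mathcomp Require Import all_boot.
From Stdlib Require Import Reals.
From Coquelicot Require Import Coquelicot.

Set Implicit Arguments.
Unset Strict Implicit.
Unset Printing Implicit Defensive.

Local Open Scope R_scope.

Definition sumI (K : nat) (I : {set 'I_K}) (F : 'I_K -> R) : R :=
  \big[Rplus/0]_(i in I) F i.

Definition omega_open_interval (Omega : R -> Prop) : Prop :=
  (forall x y z, Omega x -> Omega z -> x <= y <= z -> Omega y) /\
  (forall x, Omega x -> exists eps, 0 < eps /\
       forall y, Rabs (y - x) < eps -> Omega y).

Definition strictly_convex_on (Omega : R -> Prop) (psi : R -> R) : Prop :=
  forall x y l, Omega x -> Omega y -> x <> y -> 0 < l < 1 ->
    psi (l * x + (1 - l) * y) < l * psi x + (1 - l) * psi y.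

Definition regular_rate (Omega : R -> Prop) (psi : R -> R) (gamma : R) : Prop :=
  let f := fun x => gamma * psi x in
  (forall x, Omega x -> ex_derive f x /\ ex_derive (Derive f) x) /\
  exists h : R -> R,
    (forall x, Omega x -> h (Derive f x) = x) /\
    (forall x, Omega x -> ex_derive h (Derive f x)) /\
    (forall x y l, Omega x -> Omega y -> 0 <= l <= 1 ->
       h (l * Derive f x + (1 - l) * Derive f y)
         <= l * h (Derive f x) + (1 - l) * h (Derive f y)).

Definition phi (K : nat) (g : 'I_K -> R) (psi : R -> R) (I : {set 'I_K})
  (x : 'I_K -> R) : R :=
  sumI I (fun i => g i * psi (x i)).

Definition grad_phi (K : nat) (g : 'I_K -> R) (psi : R -> R) (I : {set 'I_K})
  (x : 'I_K -> R) (i : 'I_K) : R :=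
  Derive (fun y => phi g psi I (fun j => if j == i then y else x j)) (x i).

(* Main.v *)
From HB Require Import structures.
Require Import Defs.
From mathcomp Require Import all_boot.
From Stdlib Require Import Reals Lra.
From Coquelicot Require Import Coquelicot.

Local Open Scope R_scope.

HB.instance Definition _ := Monoid.isComLaw.Build R 0 Rplus (fun a b c => esym (Rplus_assoc a b c)) Rplus_comm Rplus_0_l.

Lemma sumI_lin K (I : {set 'I_K}) a b F G :
  sumI I (fun i => a * F i + b * G i) = a * sumI I F + b * sumI I G.
Proof.
rewrite /sumI; apply: (big_rec3 (fun x y z => x = a * y + b * z)).
  ring.
by move=> i y1 y2 y3 _ ->; ring.
Qed.

Lemma sumI_le K (I : {set 'I_K}) F G :
  (forall i, i \in I -> F i <= G i) -> sumI I F <= sumI I G.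
Proof.
move=> H; rewrite /sumI; apply: (big_ind2 (fun x y => x <= y)).
- lra.
- move=> ? ? ? ? ? ?; lra.
- exact: H.
Qed.

Lemma sumI_pos K (I : {set 'I_K}) F :
  I != set0 -> (forall i, i \in I -> 0 < F i) -> 0 < sumI I F.
Proof.
move=> /set0Pn [j Hj] H; rewrite /sumI (bigD1 j Hj) /=.
apply: Rplus_lt_le_0_compat; first exact: H.
apply: (big_ind (fun x => 0 <= x)); first lra.
  move=> ? ? ? ?; lra.
by move=> i /andP [Hi _]; apply: Rlt_le; apply: H.
Qed.

Lemma assemble_le K (I : {set 'I_K}) (A B u v : 'I_K -> R) c :
  I != set0 -> (forall i, i \in I -> 0 < A i) ->
  (forall i, i \in I -> c * A i - B i <= u i - v i) ->
  sumI I u = sumI I v -> c <= / sumI I A * sumI I B.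
Proof.
move=> HI HA H Huv.
have HS := @sumI_pos K I A HI HA.
have := @sumI_le K I (fun i => c * A i + (-1) * B i) (fun i => 1 * u i + (-1) * v i).
rewrite !sumI_lin => Hle.
have {}Hle : c * sumI I A <= sumI I B.
  have : c * sumI I A + -1 * sumI I B <= 1 * sumI I u + -1 * sumI I v.
    apply: Hle => i Hi; have := H i Hi; lra.
  lra.
apply: (Rmult_le_reg_l (sumI I A)) => //.
rewrite -Rmult_assoc Rinv_r; last lra.
lra.
Qed.

Lemma assemble_ge K (I : {set 'I_K}) (A B u v : 'I_K -> R) c :
  I != set0 -> (forall i, i \in I -> 0 < A i) ->
  (forall i, i \in I -> B i - c * A i <= u i - v i) ->
  sumI I u = sumI I v -> / sumI I A * sumI I B <= c.
Proof.
move=> HI HA H Huv.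
have HS := @sumI_pos K I A HI HA.
have := @sumI_le K I (fun i => (-c) * A i + 1 * B i) (fun i => 1 * u i + (-1) * v i).
rewrite !sumI_lin => Hle.
have {}Hle : sumI I B <= c * sumI I A.
  have : (-c) * sumI I A + 1 * sumI I B <= 1 * sumI I u + -1 * sumI I v.
    apply: Hle => i Hi; have := H i Hi; lra.
  lra.
apply: (Rmult_le_reg_l (sumI I A)) => //.
rewrite -Rmult_assoc Rinv_r; last lra.
lra.
Qed.

Lemma grad_phiE K g psi (I : {set 'I_K}) x i :
  i \in I -> ex_derive psi (x i) ->
  grad_phi g psi I x i = g i * Derive psi (x i).
Proof.
move=> Hi Hd; rewrite /grad_phi.
set C := \big[Rplus/0]_(j in I | j != i) (g j * psi (x j)).
rewrite (Derive_ext _ (fun y => g i * psi y + C)); last first.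
  move=> y; rewrite /phi /sumI (bigD1 i Hi) /= eqxx; congr (_ + _).
  by apply: eq_bigr => j /andP [_ /negbTE ->].
rewrite Derive_plus; first by rewrite Derive_const Derive_scal; ring.
  exact: ex_derive_scal.
exact: ex_derive_const.
Qed.

Lemma tangent (F : R -> R) x y D :
  derivable_pt_lim F x D ->
  (forall l, 0 < l < 1 -> F (l * y + (1 - l) * x) <= l * F y + (1 - l) * F x) ->
  D * (y - x) <= F y - F x.
Proof.
intros HD Hc.
destruct (Req_dec y x) as [E|Nxy].
{ subst; lra. }
destruct (Rle_or_lt (D * (y - x)) (F y - F x)) as [H|H]; [exact H|exfalso].
set (k := Rabs (y - x)).
assert (Hk : 0 < k) by (apply Rabs_pos_lt; lra).
set (eps := (D * (y - x) - (F y - F x)) / (2 * k)).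
assert (He : 0 < eps) by (unfold eps; apply Rdiv_lt_0_compat; lra).
destruct (HD eps He) as [delta Hdelta].
set (l := Rmin (1/2) (delta / (2 * k))).
assert (Hd : 0 < delta) by apply cond_pos.
assert (Hl0 : 0 < l).
{ unfold l; apply Rmin_glb_lt; [lra|apply Rdiv_lt_0_compat; lra]. }
assert (Hl1 : l < 1) by (unfold l; pose proof (Rmin_l (1/2) (delta / (2 * k))); lra).
assert (Hl2 : l * k < delta).
{ assert (l <= delta / (2 * k)) by (unfold l; apply Rmin_r).
  apply Rle_lt_trans with (delta / (2 * k) * k).
  - apply Rmult_le_compat_r; lra.
  - replace (delta / (2 * k) * k) with (delta / 2) by (field; lra). lra. }
set (hh := l * (y - x)).
assert (Hh0 : hh <> 0).
{ unfold hh; apply Rmult_integral_contrapositive; split; lra. }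
assert (Hh1 : Rabs hh < delta).
{ unfold hh; rewrite Rabs_mult (Rabs_pos_eq l); [exact Hl2|lra]. }
specialize (Hdelta hh Hh0 Hh1).
set (Q := (F (x + hh) - F x) / hh) in Hdelta.
assert (HQ : Q * hh = F (x + hh) - F x) by (unfold Q; field; exact Hh0).
assert (Hxh : x + hh = l * y + (1 - l) * x) by (unfold hh; ring).
specialize (Hc l (conj Hl0 Hl1)).
rewrite -Hxh in Hc.
assert (H1 : l * (Q * (y - x)) <= l * (F y - F x)).
{ replace (l * (Q * (y - x))) with (Q * hh) by (unfold hh; ring). lra. }
apply Rmult_le_reg_l in H1; [|lra].
assert (H2 : (D - Q) * (y - x) <= eps * k).
{ apply Rle_trans with (Rabs ((D - Q) * (y - x))); [apply Rle_abs|].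
  rewrite Rabs_mult. unfold k. apply Rmult_le_compat_r; [apply Rabs_pos|].
  rewrite Rabs_minus_sym. lra. }
assert (H3 : eps * k = (D * (y - x) - (F y - F x)) / 2) by (unfold eps; field; lra).
lra.
Qed.

Lemma deriv_nonneg (G : R -> R) u D e :
  derivable_pt_lim G u D -> 0 < e ->
  (forall v, u <= v < u + e -> G u <= G v) -> 0 <= D.
Proof.
intros HD He Hm.
destruct (Rle_or_lt 0 D) as [H|H]; [exact H|exfalso].
destruct (HD (- D / 2)) as [delta Hdelta]; [lra|].
assert (Hd : 0 < delta) by apply cond_pos.
set (hh := Rmin (delta / 2) (e / 2)).
assert (Hh0 : 0 < hh) by (unfold hh; apply Rmin_glb_lt; lra).
assert (Hh1 : hh <= delta / 2) by apply Rmin_l.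
assert (Hh2 : hh <= e / 2) by apply Rmin_r.
assert (Ha : Rabs hh < delta) by (rewrite Rabs_pos_eq; lra).
specialize (Hdelta hh ltac:(lra) Ha).
assert (HQ : 0 <= (G (u + hh) - G u) / hh).
{ apply Rdiv_le_0_compat; [|lra]. assert (G u <= G (u + hh)) by (apply Hm; lra). lra. }
apply Rabs_def2 in Hdelta. lra.
Qed.

Lemma psi_diff Omega psi g : 0 < g -> regular_rate Omega psi g -> forall u, Omega u ->
  ex_derive psi u /\ ex_derive (Derive psi) u /\
  Derive (Derive (fun x => g * psi x)) u = g * Derive (Derive psi) u.
Proof.
move=> Hg [Hd _] u Hu; have [H1 H2] := Hd u Hu.
have EDf : forall t, Derive (fun x => g * psi x) t = g * Derive psi t.
  by move=> t; rewrite Derive_scal.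
split; last split.
- apply: (ex_derive_ext (fun x => / g * (g * psi x))).
    by move=> t; rewrite -Rmult_assoc Rinv_l ?Rmult_1_l //; apply: Rgt_not_eq.
  exact: ex_derive_scal.
- apply: (ex_derive_ext (fun x => / g * (Derive (fun x => g * psi x) x))).
    by move=> t; rewrite EDf -Rmult_assoc Rinv_l ?Rmult_1_l //; apply: Rgt_not_eq.
  exact: ex_derive_scal.
- by rewrite (Derive_ext _ _ _ EDf) Derive_scal.
Qed.

Lemma dpsi_mono Omega psi u v : strictly_convex_on Omega psi ->
  Omega u -> Omega v -> u < v -> ex_derive psi u -> ex_derive psi v ->
  Derive psi u <= Derive psi v.
Proof.
move=> Hc Hu Hv Huv Du Dv.
have T1 := tangent psi u v (Derive psi u).
have T2 := tangent psi v u (Derive psi v).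
have H1 : Derive psi u * (v - u) <= psi v - psi u.
  apply: T1; first by apply/is_derive_Reals; apply: Derive_correct.
  move=> l Hl; apply: Rlt_le; apply: Hc => //; lra.
have H2 : Derive psi v * (u - v) <= psi u - psi v.
  apply: T2; first by apply/is_derive_Reals; apply: Derive_correct.
  move=> l Hl; apply: Rlt_le; apply: Hc => //; lra.
nra.
Qed.

Lemma key Omega psi g u v :
  omega_open_interval Omega -> strictly_convex_on Omega psi -> 0 < g ->
  regular_rate Omega psi g -> Omega u -> Omega v ->
  0 < Derive (Derive psi) u /\
  (g * Derive psi v - g * Derive psi u) / (g * Derive (Derive psi) u) <= v - u.
Proof.
move=> [_ Hopen] Hc Hg Hr Hu Hv.
have [Du [DDu EDD]] := @psi_diff Omega psi g Hg Hr _ Hu.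
have [Dv _] := @psi_diff Omega psi g Hg Hr _ Hv.
have [e [He He']] := Hopen u Hu.
have Hnn : 0 <= Derive (Derive psi) u.
  apply: (deriv_nonneg (Derive psi) u _ e) => //.
    by apply/is_derive_Reals; apply: Derive_correct.
  move=> w Hw.
  have Hw' : Omega w by apply: He'; rewrite Rabs_pos_eq; lra.
  case: (Req_dec w u) => [->|Nwu]; first lra.
  apply: (@dpsi_mono Omega psi u w Hc Hu Hw') => //; first lra.
  by case: (@psi_diff Omega psi g Hg Hr _ Hw').
move: (Hr) => [_ [h [Hinv [Hhd Hconv]]]].
set f := fun x => g * psi x.
have EDf : forall t, Derive f t = g * Derive psi t.
  by move=> t; rewrite /f Derive_scal.
have DDf : ex_derive (Derive f) u by case: Hr => Hd _; case: (Hd u Hu).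
have Hcomp := is_derive_comp h (Derive f) u _ _ (Derive_correct _ _ (Hhd u Hu))
   (Derive_correct _ _ DDf).
have Hloc : locally u (fun t => h (Derive f t) = t).
  exists (mkposreal e He) => t Ht; apply: Hinv; apply: He'; exact: Ht.
have Hid := is_derive_ext_loc _ _ _ _ Hloc Hcomp.
have Hone : Derive (Derive f) u * Derive h (Derive f u) = 1.
  have E1 := is_derive_unique _ _ _ Hid.
  have E2 : Derive (fun t => t) u = 1 by rewrite Derive_id.
  rewrite E1 in E2; exact: E2.
rewrite /f EDD in Hone.
have Hne : Derive (Derive psi) u <> 0.
  by move=> E; rewrite E Rmult_0_r Rmult_0_l in Hone; lra.
split; first lra.
have Ht := tangent h (Derive f u) (Derive f v)
   (Derive h (Derive f u)).
have := Ht (proj1 (is_derive_Reals _ _ _) (Derive_correct _ _ (Hhd u Hu))).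
move=> /(_ (fun l Hl => Hconv v u l Hv Hu (conj (Rlt_le _ _ (proj1 Hl)) (Rlt_le _ _ (proj2 Hl))))).
rewrite !Hinv // !EDf.
have -> : Derive h (g * Derive psi u) = / (g * Derive (Derive psi) u).
  rewrite -EDf.
  apply: (Rmult_eq_reg_l (g * Derive (Derive psi) u)); last by apply: Rmult_integral_contrapositive; split; lra.
  rewrite Rinv_r; last by apply: Rmult_integral_contrapositive; split; lra.
  by rewrite -Hone.
move=> H; rewrite /Rdiv; lra.
Qed.

Theorem lemma35 (K : nat) (I : {set 'I_K}) (Omega : R -> Prop) (psi : R -> R)
  (gt gt1 : 'I_K -> R) (lhat : 'I_K -> R) (c : R) (p q : 'I_K -> R) :
  I != set0 ->
  omega_open_interval Omega ->
  strictly_convex_on Omega psi ->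
  (forall i, 0 < gt i) -> (forall i, 0 < gt1 i) ->
  (forall i, regular_rate Omega psi (gt i)) ->
  (forall i, regular_rate Omega psi (gt1 i)) ->
  (forall i, i \in I -> Omega (p i) /\ Omega (q i)) ->
  sumI I p = sumI I q ->
  ((forall i, i \in I ->
      grad_phi gt1 psi I q i = grad_phi gt psi I p i - lhat i + c) ->
   c <= / sumI I (fun i => 1 / (gt1 i * Derive (Derive psi) (p i))) *
        sumI I (fun i => ((gt1 i - gt i) * Derive psi (p i) + lhat i)
                         / (gt1 i * Derive (Derive psi) (p i)))
   /\
   / sumI I (fun i => 1 / (gt i * Derive (Derive psi) (q i))) *
        sumI I (fun i => ((gt1 i - gt i) * Derive psi (q i) + lhat i)
                         / (gt i * Derive (Derive psi) (q i))) <= c)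
  /\
  ((forall i, i \in I ->
      grad_phi gt psi I q i = grad_phi gt psi I p i - lhat i + c) ->
   / sumI I (fun i => 1 / (gt i * Derive (Derive psi) (q i))) *
        sumI I (fun i => lhat i / (gt i * Derive (Derive psi) (q i))) <= c
   /\
   c <= / sumI I (fun i => 1 / (gt i * Derive (Derive psi) (p i))) *
        sumI I (fun i => lhat i / (gt i * Derive (Derive psi) (p i)))).
Proof.
move=> HI Hopen Hc Hgt Hgt1 Hr Hr1 HO Hsum.
have Dp : forall i, i \in I -> ex_derive psi (p i).
  by move=> i Hi; case: (@psi_diff Omega psi (gt i) (Hgt i) (Hr i) (p i) (proj1 (HO i Hi))).
have Dq : forall i, i \in I -> ex_derive psi (q i).
  by move=> i Hi; case: (@psi_diff Omega psi (gt i) (Hgt i) (Hr i) (q i) (proj2 (HO i Hi))).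
have K1 := fun i u v => @key Omega psi (gt1 i) u v Hopen Hc (Hgt1 i) (Hr1 i).
have K0 := fun i u v => @key Omega psi (gt i) u v Hopen Hc (Hgt i) (Hr i).
have nz : forall a b, 0 < a -> 0 < b -> a * b <> 0.
  by move=> a b Ha Hb; apply: Rgt_not_eq; apply: Rmult_lt_0_compat.
have pos : forall a b, 0 < a -> 0 < b -> 0 < 1 / (a * b).
  by move=> a b Ha Hb; apply: Rdiv_lt_0_compat; [lra|apply: Rmult_lt_0_compat].
split => E.
- split.
  + apply: (@assemble_le K I _ _ q p c HI); last by rewrite Hsum.
      move=> i Hi; have [Hp Hq] := HO i Hi.
      by apply: pos => //; case: (K1 i (p i) (q i) Hp Hq).
    move=> i Hi; have [Hp Hq] := HO i Hi.
    have [Hd Ht] := K1 i (p i) (q i) Hp Hq.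
    have Ei := E i Hi; rewrite !grad_phiE // in Ei; try by [apply: Dp | apply: Dq].
    have Hn := nz _ _ (Hgt1 i) Hd; have := Hgt1 i; have := Hgt i; move=> ? ?.
    have Eq : c * (1 / (gt1 i * Derive (Derive psi) (p i))) -
      ((gt1 i - gt i) * Derive psi (p i) + lhat i) / (gt1 i * Derive (Derive psi) (p i))
      = (gt1 i * Derive psi (q i) - gt1 i * Derive psi (p i)) /
        (gt1 i * Derive (Derive psi) (p i)).
      rewrite Ei; field; try split; lra.
    by rewrite Eq.
  + apply: (@assemble_ge K I _ _ p q c HI) => //.
      move=> i Hi; have [Hp Hq] := HO i Hi.
      by apply: pos => //; case: (K0 i (q i) (p i) Hq Hp).
    move=> i Hi; have [Hp Hq] := HO i Hi.
    have [Hd Ht] := K0 i (q i) (p i) Hq Hp.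
    have Ei := E i Hi; rewrite !grad_phiE // in Ei; try by [apply: Dp | apply: Dq].
    have Hn := nz _ _ (Hgt i) Hd; have := Hgt1 i; have := Hgt i; move=> ? ?.
    have Eq : ((gt1 i - gt i) * Derive psi (q i) + lhat i) / (gt i * Derive (Derive psi) (q i))
      - c * (1 / (gt i * Derive (Derive psi) (q i)))
      = (gt i * Derive psi (p i) - gt i * Derive psi (q i)) /
        (gt i * Derive (Derive psi) (q i)).
      have -> : gt i * Derive psi (p i) = gt1 i * Derive psi (q i) + lhat i - c by lra.
      field; try split; lra.
    by rewrite Eq.
- split.
  + apply: (@assemble_ge K I _ _ p q c HI) => //.
      move=> i Hi; have [Hp Hq] := HO i Hi.
      by apply: pos => //; case: (K0 i (q i) (p i) Hq Hp).
    move=> i Hi; have [Hp Hq] := HO i Hi.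
    have [Hd Ht] := K0 i (q i) (p i) Hq Hp.
    have Ei := E i Hi; rewrite !grad_phiE // in Ei; try by [apply: Dp | apply: Dq].
    have Hn := nz _ _ (Hgt i) Hd; have := Hgt1 i; have := Hgt i; move=> ? ?.
    have Eq : lhat i / (gt i * Derive (Derive psi) (q i))
      - c * (1 / (gt i * Derive (Derive psi) (q i)))
      = (gt i * Derive psi (p i) - gt i * Derive psi (q i)) /
        (gt i * Derive (Derive psi) (q i)).
      have -> : gt i * Derive psi (p i) = gt i * Derive psi (q i) + lhat i - c by lra.
      field; try split; lra.
    by rewrite Eq.
  + apply: (@assemble_le K I _ _ q p c HI); last by rewrite Hsum.
      move=> i Hi; have [Hp Hq] := HO i Hi.
      by apply: pos => //; case: (K0 i (p i) (q i) Hp Hq).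
    move=> i Hi; have [Hp Hq] := HO i Hi.
    have [Hd Ht] := K0 i (p i) (q i) Hp Hq.
    have Ei := E i Hi; rewrite !grad_phiE // in Ei; try by [apply: Dp | apply: Dq].
    have Hn := nz _ _ (Hgt i) Hd; have := Hgt1 i; have := Hgt i; move=> ? ?.
    have Eq : c * (1 / (gt i * Derive (Derive psi) (p i))) -
      lhat i / (gt i * Derive (Derive psi) (p i))
      = (gt i * Derive psi (q i) - gt i * Derive psi (p i)) /
        (gt i * Derive (Derive psi) (p i)).
      rewrite Ei; field; try split; lra.
    by rewrite Eq.
Qed.
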